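(* For every $k\ge1$, the element $[c_k,x_2]=c_kx_2-x_2c_k$ does not belong to $S_m$ for any $m\ge1$.
   Context: $K$ is a field of characteristic zero and $K\langle x_2,x_3\rangle$ is the free associative $K$-algebra with unity. $[a,b]=ab-ba$; $c_1=[x_2,x_3]$, $c_{k+1}=[c_k,x_3]$ for $k\ge1$. Let $V$ be the group of automorphisms $\varphi=(x_2+g(x_3),\,x_3+h)$ of $K\langle x_2,x_3\rangle$ with $g\in K\langle x_3\rangle$, $h\in K$, and write $f^\varphi=f(x_2+g(x_3),x_3+h)$. Define $S_1=S=\{f\in K\langle x_2,x_3\rangle\mid f^\varphi=f\ \forall\varphi\in V\}$ and $S_{m+1}=\{f\in K\langle x_2,x_3\rangle\mid f^\varphi-f\in S_m\ \forall\varphi\in V\}$ for $m\ge1$. *)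

(* Defs.v *)
From HB Require Import structures.
From mathcomp Require Import all_boot all_order all_algebra.
Set Implicit Arguments. Unset Strict Implicit. Unset Printing Implicit Defensive.
Import GRing.Theory.
Local Open Scope ring_scope.

(* Words in the letters x2, x3 are encoded as [seq bool]
   (false = x2, true = x3).  An element of K<x2,x3> is represented by a
   finite formal linear combination of words, i.e. a list of
   (coefficient, word) pairs; two representations denote the same element
   iff all their word coefficients agree ([nceq]). *)

Section FreeAlg.
Variable K : fieldType.

Definition word := seq bool.
Definition ncpoly := seq (K * word).

Definition nccoef (p : ncpoly) (w : word) : K :=
  \sum_(cw <- p | cw.2 == w) cw.1.

Definition nceq (p q : ncpoly) : Prop := forall w, nccoef p w = nccoef q w.

Definition ncone : ncpoly := [:: (1, [::])].
Definition ncx2 : ncpoly := [:: (1, [:: false])].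
Definition ncx3 : ncpoly := [:: (1, [:: true])].
Definition ncadd (p q : ncpoly) : ncpoly := p ++ q.
Definition ncscale (a : K) (p : ncpoly) : ncpoly := [seq (a * cw.1, cw.2) | cw <- p].
Definition ncopp (p : ncpoly) : ncpoly := ncscale (-1) p.
Definition ncsub (p q : ncpoly) : ncpoly := ncadd p (ncopp q).
Definition ncmul (p q : ncpoly) : ncpoly :=
  [seq (cu.1 * dv.1, cu.2 ++ dv.2) | cu <- p, dv <- q].
Definition nccomm (p q : ncpoly) : ncpoly := ncsub (ncmul p q) (ncmul q p).

Definition ncpoly_x3 (g : {poly K}) : ncpoly :=
  [seq (g`_i, nseq i true) | i <- iota 0 (size g)].

(* The automorphism phi = (x2 + g(x3), x3 + h) of V, acting by substitution
   f |-> f(x2 + g(x3), x3 + h). *)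
Definition img_letter (g : {poly K}) (h : K) (b : bool) : ncpoly :=
  if b then ncadd ncx3 (ncscale h ncone) else ncadd ncx2 (ncpoly_x3 g).
Definition subst_word (g : {poly K}) (h : K) (w : word) : ncpoly :=
  foldr (fun b acc => ncmul (img_letter g h b) acc) ncone w.
Definition ncsubst (g : {poly K}) (h : K) (p : ncpoly) : ncpoly :=
  flatten [seq ncscale cw.1 (subst_word g h cw.2) | cw <- p].

(* S_m, for m >= 1 (the value at m = 0 is irrelevant and set equal to S_1):
   S_1 = { f | f^phi = f for all phi in V },
   S_(m+1) = { f | f^phi - f in S_m for all phi in V }. *)
Fixpoint inS (m : nat) (f : ncpoly) : Prop :=
  match m with
  | 0 | 1 => forall (g : {poly K}) (h : K), nceq (ncsubst g h f) f
  | m'.+1 => forall (g : {poly K}) (h : K), inS m' (ncsub (ncsubst g h f) f)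
  end.

(* c_1 = [x2,x3], c_(k+1) = [c_k, x3]; c_0 := x2 is a harmless convention
   making the recursion uniform. *)
Fixpoint c_ (k : nat) : ncpoly :=
  match k with
  | 0 => ncx2
  | k'.+1 => nccomm (c_ k') ncx3
  end.

End FreeAlg.

(* Main.v *)
Require Import Defs.
From HB Require Import structures.
From mathcomp Require Import all_boot all_order all_algebra.
From mathcomp Require Import ring.
Set Implicit Arguments. Unset Strict Implicit. Unset Printing Implicit Defensive.
Import GRing.Theory.
Local Open Scope ring_scope.

Definition weval (K : fieldType) (A B : 'M[K]_2) (w : word) : 'M[K]_2 :=
  foldr (fun b acc => (if b then B else A) * acc) 1 w.
Definition ev (K : fieldType) (A B : 'M[K]_2) (p : ncpoly K) : 'M[K]_2 :=
  \sum_(cw <- p) cw.1 *: weval A B cw.2.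

Lemma weval_cat (K : fieldType) (A B : 'M[K]_2) u v :
  weval A B (u ++ v) = weval A B u * weval A B v.
Proof. elim: u => [|b u IH] /=; [by rewrite mul1r | by rewrite IH mulrA]. Qed.

Lemma ev_cat (K : fieldType) (A B : 'M[K]_2) (p q : ncpoly K) :
  ev A B (p ++ q) = ev A B p + ev A B q.
Proof. by rewrite /ev big_cat. Qed.

Lemma ev_scale (K : fieldType) (A B : 'M[K]_2) a (p : ncpoly K) :
  ev A B (ncscale a p) = a *: ev A B p.
Proof.
rewrite /ev /ncscale big_map scaler_sumr; apply: eq_bigr => cw _ /=.
by rewrite scalerA.
Qed.

Lemma ev_sub (K : fieldType) (A B : 'M[K]_2) (p q : ncpoly K) :
  ev A B (ncsub p q) = ev A B p - ev A B q.
Proof. by rewrite /ncsub /ncadd ev_cat /ncopp ev_scale scaleN1r. Qed.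

Lemma ev_mul (K : fieldType) (A B : 'M[K]_2) (p q : ncpoly K) :
  ev A B (ncmul p q) = ev A B p * ev A B q.
Proof.
rewrite /ev /ncmul big_allpairs_dep mulr_suml; apply: eq_bigr => cu _.
rewrite mulr_sumr; apply: eq_bigr => dv _ /=.
by rewrite weval_cat -scalerAl -scalerAr scalerA.
Qed.

Lemma ev_comm (K : fieldType) (A B : 'M[K]_2) (p q : ncpoly K) :
  ev A B (nccomm p q) = ev A B p * ev A B q - ev A B q * ev A B p.
Proof. by rewrite /nccomm ev_sub !ev_mul. Qed.

Lemma ev_one (K : fieldType) (A B : 'M[K]_2) : ev A B (ncone K) = 1.
Proof. by rewrite /ev big_seq1 scale1r. Qed.

Lemma ev_x2 (K : fieldType) (A B : 'M[K]_2) : ev A B (ncx2 K) = A.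
Proof. by rewrite /ev big_seq1 scale1r /= mulr1. Qed.

Lemma ev_x3 (K : fieldType) (A B : 'M[K]_2) : ev A B (ncx3 K) = B.
Proof. by rewrite /ev big_seq1 scale1r /= mulr1. Qed.

Definition PB (K : fieldType) (g : {poly K}) (B : 'M[K]_2) :=
  \sum_(i <- iota 0 (size g)) g`_i *: B ^+ i.

Lemma ev_px3 (K : fieldType) (A B : 'M[K]_2) g : ev A B (ncpoly_x3 g) = PB g B.
Proof.
rewrite /ev /ncpoly_x3 /PB big_map; apply: eq_bigr => i _ /=.
congr (_ *: _); elim: i => [|i IH] //=; by rewrite IH exprS.
Qed.

Lemma ev_substword (K : fieldType) (A B : 'M[K]_2) g h w :
  ev A B (subst_word g h w) = weval (A + PB g B) (B + h *: 1) w.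
Proof.
elim: w => [|b w IH] /=; first by rewrite ev_one.
rewrite ev_mul IH; congr (_ * _); case: b => /=.
  by rewrite /ev !big_cons big_nil /= !mulr1 scale1r addr0.
by rewrite /ev big_cons /= mulr1 scale1r -/(ev A B (ncpoly_x3 g)) ev_px3.
Qed.

Lemma ev_subst (K : fieldType) (A B : 'M[K]_2) g h (p : ncpoly K) :
  ev A B (ncsubst g h p) = ev (A + PB g B) (B + h *: 1) p.
Proof.
rewrite /ncsubst {1}/ev big_flatten big_map /ev; apply: eq_bigr => cw _.
change (ev A B (ncscale cw.1 (subst_word g h cw.2)) = cw.1 *: weval (A + PB g B) (B + h *: 1) cw.2).
by rewrite ev_scale ev_substword.
Qed.

Lemma coef_cons (K : fieldType) (cw : K * word) (p : ncpoly K) u :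
  nccoef (cw :: p) u = (if cw.2 == u then cw.1 else 0) + nccoef p u.
Proof. by rewrite /nccoef big_cons; case: ifP; rewrite ?add0r. Qed.

Lemma ev_coef (K : fieldType) (A B : 'M[K]_2) (s : seq word) (p : ncpoly K) :
  uniq s -> {subset [seq cw.2 | cw <- p] <= s} ->
  \sum_(cw <- p) cw.1 *: weval A B cw.2 = \sum_(u <- s) nccoef p u *: weval A B u.
Proof.
move=> Hu; elim: p => [|cw p IH] Hs.
  rewrite big_nil big1 // => u _; by rewrite /nccoef big_nil scale0r.
rewrite big_cons IH; last by move=> x Hx; apply: Hs; rewrite /= inE Hx orbT.
under [RHS]eq_bigr => u _ do rewrite coef_cons scalerDl.
rewrite big_split /=; congr (_ + _).
have Hin : cw.2 \in s by apply: Hs; rewrite /= inE eqxx.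
rewrite (bigD1_seq cw.2) //= eqxx big1 ?addr0 // => u.
by rewrite eq_sym => /negbTE ->; rewrite scale0r.
Qed.

Lemma ev_nceq (K : fieldType) (A B : 'M[K]_2) (p q : ncpoly K) :
  nceq p q -> ev A B p = ev A B q.
Proof.
move=> H.
pose s := undup ([seq cw.2 | cw <- p] ++ [seq cw.2 | cw <- q]).
have Us : uniq s by rewrite undup_uniq.
have Sp : {subset [seq cw.2 | cw <- p] <= s}.
  by move=> x Hx; rewrite mem_undup mem_cat Hx.
have Sq : {subset [seq cw.2 | cw <- q] <= s}.
  by move=> x Hx; rewrite mem_undup mem_cat Hx orbT.
rewrite /ev (ev_coef A B Us Sp) (ev_coef A B Us Sq).
by apply: eq_bigr => u _; rewrite H.
Qed.

Fixpoint Ck (K : fieldType) (A B : 'M[K]_2) (k : nat) : 'M[K]_2 :=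
  match k with 0 => A | k'.+1 => Ck A B k' * B - B * Ck A B k' end.

Lemma ev_c (K : fieldType) (A B : 'M[K]_2) k : ev A B (c_ K k) = Ck A B k.
Proof. elim: k => [|k IH] /=; [by rewrite ev_x2 | by rewrite ev_comm IH ev_x3]. Qed.

Lemma CkS (K : fieldType) (A B : 'M[K]_2) k :
  Ck A B k.+1 = Ck A B k * B - B * Ck A B k.
Proof. by []. Qed.

Lemma commS (K : fieldType) (X B : 'M[K]_2) h :
  X * (B + h *: 1) - (B + h *: 1) * X = X * B - B * X.
Proof.
rewrite mulrDr mulrDl -scalerAr -scalerAl mulr1 mul1r opprD addrACA subrr addr0.
by [].
Qed.

Lemma Ck_inv (K : fieldType) (A B G : 'M[K]_2) h k : (1 <= k)%N ->
  G * B = B * G -> Ck (A + G) (B + h *: 1) k = Ck A B k.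
Proof.
move=> + HG; elim: k => [//|k IH] _.
rewrite !CkS commS; case: k IH => [|k] IH.
  by rewrite /= mulrDl mulrDr HG opprD addrACA subrr addr0.
by rewrite IH.
Qed.

Lemma Ck_shift (K : fieldType) (A B : 'M[K]_2) h k : (1 <= k)%N ->
  Ck A (B + h *: 1) k = Ck A B k.
Proof.
move=> Hk; have := @Ck_inv K A B 0 h k Hk; rewrite addr0; apply.
by rewrite mul0r mulr0.
Qed.

Definition Dm (K : fieldType) (a b : K) : 'M[K]_2 :=
  \matrix_(i, j) (if val i == val j then (if val i == 0%N then a else b) else 0).
Definition Em (K : fieldType) : 'M[K]_2 :=
  \matrix_(i, j) (if (val i == 0%N) && (val j == 1%N) then 1 else 0).

Ltac mxcase := apply/matrixP => - [[|[|?]] ?] [[|[|?]] ?];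
  rewrite ?mxE ?big_ord_recr ?big_ord0 /= ?mxE //=.

Lemma Dmul (K : fieldType) (a b c d : K) : Dm a b * Dm c d = Dm (a * c) (b * d).
Proof. rewrite -mulmxE; mxcase; ring. Qed.
Lemma Dadd (K : fieldType) (a b c d : K) : Dm a b + Dm c d = Dm (a + c) (b + d).
Proof. mxcase; ring. Qed.
Lemma Dsub (K : fieldType) (a b c d : K) : Dm a b - Dm c d = Dm (a - c) (b - d).
Proof. mxcase; ring. Qed.
Lemma Dscale (K : fieldType) (x a b : K) : x *: Dm a b = Dm (x * a) (x * b).
Proof. mxcase; ring. Qed.
Lemma Dshift (K : fieldType) (a b h : K) : Dm a b + h *: 1 = Dm (a + h) (b + h).
Proof. mxcase; ring. Qed.
Lemma D0 (K : fieldType) : Dm 0 0 = 0 :> 'M[K]_2.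
Proof. by mxcase. Qed.
Lemma D1 (K : fieldType) : Dm 1 1 = 1 :> 'M[K]_2.
Proof. by mxcase. Qed.
Lemma EDm (K : fieldType) (a b : K) : Em K * Dm a b = b *: Em K.
Proof. rewrite -mulmxE; mxcase; ring. Qed.
Lemma DmE (K : fieldType) (a b : K) : Dm a b * Em K = a *: Em K.
Proof. rewrite -mulmxE; mxcase; ring. Qed.
Lemma Em_neq0 (K : fieldType) (c : K) : c *: Em K = 0 -> c = 0.
Proof.
move/matrixP => /(_ ord0 (lift ord0 ord0)); rewrite !mxE /=; by rewrite mulr1.
Qed.

Lemma Dexp (K : fieldType) (a b : K) i : Dm a b ^+ i = Dm (a ^+ i) (b ^+ i).
Proof.
elim: i => [|i IH]; first by rewrite !expr0 D1.
by rewrite !exprS IH Dmul.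
Qed.

Lemma Dsum (K : fieldType) (I : Type) (r : seq I) (f g : I -> K) :
  \sum_(i <- r) Dm (f i) (g i) = Dm (\sum_(i <- r) f i) (\sum_(i <- r) g i).
Proof.
elim: r => [|x r IH]; first by rewrite !big_nil D0.
by rewrite !big_cons IH Dadd.
Qed.

Lemma PB_Dm (K : fieldType) (g : {poly K}) (a b : K) :
  PB g (Dm a b) = Dm g.[a] g.[b].
Proof.
rewrite /PB.
under eq_bigr => i _ do rewrite Dexp Dscale.
rewrite Dsum !horner_coef.
by rewrite -!(big_mkord xpredT (fun i => g`_i * _ ^+ i)) /index_iota subn0.
Qed.

Lemma PB0 (K : fieldType) (B : 'M[K]_2) : PB 0 B = 0.
Proof. by rewrite /PB size_poly0 big_nil. Qed.

Definition ff (K : fieldType) (n : nat) (x : K) := \prod_(i < n) (x - i%:R).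

Definition qq (K : fieldType) (m j : nat) (x : K) := (m ^_ j)%:R * ff (m - j) x.

Lemma qq_step (K : fieldType) (m j : nat) (x : K) : (j < m)%N ->
  qq m j (x + 1) - qq m j x = qq m j.+1 x.
Proof.
move=> Hj; rewrite /qq.
have -> : (m - j = (m - j.+1).+1)%N by rewrite subnSK.
set r := (m - j.+1)%N.
rewrite ffactnSr.
have -> : (m - j = r.+1)%N by rewrite /r subnSK.
rewrite /ff big_ord_recl big_ord_recr /=.
have -> : \prod_(i < r) (x + 1 - (bump 0 i)%:R) = \prod_(i < r) (x - i%:R).
  by apply: eq_bigr => i _; rewrite /bump /= add1n mulrSr; ring.
rewrite natrM mulrSr; ring.
Qed.

Definition G0 (K : fieldType) (m : nat) : {poly K} := \prod_(i < m) ('X - (i%:R)%:P).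

Lemma G0E (K : fieldType) (m : nat) (x : K) : (G0 K m).[x] = qq m 0 x.
Proof.
rewrite /G0 /qq ffactn0 subn0 mul1r horner_prod /ff.
by apply: eq_bigr => i _; rewrite hornerXsubC.
Qed.

Definition gs (K : fieldType) (m j : nat) : {poly K} := if j == 0%N then G0 K m else 0.
Definition hs (K : fieldType) (j : nat) : K := if j == 0%N then 0 else 1.

Fixpoint T (K : fieldType) (m : nat) (f : ncpoly K) (j : nat) : ncpoly K :=
  match j with
  | 0 => f
  | j'.+1 => ncsub (ncsubst (gs K m j') (hs K j') (T m f j')) (T m f j')
  end.

Lemma inS_T (K : fieldType) (m : nat) (f : ncpoly K) n j :
  inS n.+1 (T m f j) -> inS 1 (T m f (n + j)).
Proof.
elim: n j => [|n IH] j H; first by rewrite add0n.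
rewrite addSnnS; apply: IH; exact: (H (gs K m j) (hs K j)).
Qed.

Lemma commD (K : fieldType) (C X Y : 'M[K]_2) :
  C * (X + Y) - (X + Y) * C = (C * X - X * C) + (C * Y - Y * C).
Proof. by rewrite mulrDr mulrDl opprD addrACA. Qed.

Lemma commB (K : fieldType) (C X Y : 'M[K]_2) :
  (C * X - X * C) - (C * Y - Y * C) = C * (X - Y) - (X - Y) * C.
Proof. by rewrite mulrBr mulrBl !opprD addrACA. Qed.

Lemma Phi (K : fieldType) (m k : nat) (hk : (1 <= k)%N) j : (j < m)%N ->
  forall (A : 'M[K]_2) s t,
  ev A (Dm s t) (T m (nccomm (c_ K k) (ncx2 K)) j.+1) =
  Ck A (Dm s t) k * Dm (qq m j s) (qq m j t) - Dm (qq m j s) (qq m j t) * Ck A (Dm s t) k.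
Proof.
elim: j => [|j IH] Hj A s t.
  rewrite /= ev_sub ev_subst !ev_comm !ev_c !ev_x2 /gs /hs /= PB_Dm Ck_inv //;
    last by rewrite !Dmul; congr Dm; rewrite mulrC.
  by rewrite commD addrAC subrr add0r !G0E.
rewrite [T _ _ _]/= ev_sub ev_subst /gs /hs /= PB0 addr0 Dshift.
rewrite !IH; try by apply: ltnW.
rewrite -Dshift Ck_shift // commB Dsub !qq_step //; exact: ltnW.
Qed.

Lemma CkE (K : fieldType) k : Ck (Em K) (Dm 0 1) k = Em K.
Proof.
elim: k => [//|k IH]; rewrite CkS IH EDm DmE scale1r scale0r subr0 //.
Qed.

Theorem proposition1 (K : fieldType) (charK0 : [pchar K] =i pred0)
    (k m : nat) (hk : (1 <= k)%N) (hm : (1 <= m)%N) :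
  ~ inS m (nccomm (c_ K k) (ncx2 K)).
Proof.
move=> H; case: m hm H => [//|n] _ H.
set f := nccomm (c_ K k) (ncx2 K) in H.
have H1 : inS 1 (T n.+1 f (n + 0)) := @inS_T K n.+1 f n 0 H.
rewrite addn0 in H1.
have H3 := ev_nceq (Em K) (Dm 0 1) (H1 (gs K n.+1 n) (hs K n)).
have : ev (Em K) (Dm 0 1) (T n.+1 f n.+1) = 0.
  by rewrite [T _ _ _]/= ev_sub H3 subrr.
rewrite /f Phi // CkE EDm DmE -scalerBl => /Em_neq0.
rewrite /qq subSnn /ff !big_ord1 /= mulr0n !subr0 mulr1 mulr0 subr0 => /eqP.
rewrite ((pcharf0P K).1 charK0) => /eqP H0.
by have := ffact_gt0 n.+1 n; rewrite H0 leqnSn.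
Qed.
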